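(* Let $\bar\mu=(\mu,\mu_1,\mu_2)\in\{+,-\}^3$ and let $\mathfrak m_{\bar\mu}$ be the multiplier satisfying $R_\mu\mathcal N_{\bar\mu}(R^{-1}_{\mu_1}G_1,R^{-1}_{\mu_2}G_2)=Q_{\bar\mu}[\mathfrak m_{\bar\mu}](G_1,G_2)$ for all scalar $G_1,G_2$. Then $Q_{\bar\mu}[\mathfrak m_{\bar\mu}](G_1,G_2)$ is a finite linear combination (with constant coefficients) of bilinear expressions of the form $$|\nabla|e^{-\mu it\Lambda}D_0\big[(D_1e^{\mu_1it\Lambda}G_1)\cdot(D_2e^{\mu_2it\Lambda}G_2)\big],$$ where each of $D_0,D_1,D_2$ is a product of operators from $\{\Lambda,\sqrt{1-\Lambda^2},\partial_1/|\nabla_h|,\partial_2/|\nabla_h|\}$. The same statement holds with these expressions replaced by $e^{-\mu it\Lambda}D_0[(D_1e^{\mu_1it\Lambda}G_1)\cdot(|\nabla|D_2e^{\mu_2it\Lambda}G_2)]$.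
   Context: $\hat f(\xi)=\int f(x)e^{-ix\cdot\xi}dx$. $\Lambda(\xi)=\xi_3/|\xi|$; $\Lambda$, $\sqrt{1-\Lambda^2}$, $e^{\pm it\Lambda}$ denote the Fourier multipliers with symbols $\Lambda(\xi)$, $\sqrt{1-\Lambda(\xi)^2}$, $e^{\pm it\Lambda(\xi)}$; $\nabla_h=(\partial_1,\partial_2)$. $\mathbb P_L=\mathrm{Id}-\nabla\Delta^{-1}\nabla\cdot$, $\mathbb P_\pm=\frac12(\mathrm{Id}\pm|\nabla|^{-1}\nabla\times)$. $\mathcal N_{\bar\mu}(\vec g_1,\vec g_2)=-e^{-\mu it\Lambda}\mathbb P_\mu\mathbb P_L\nabla\cdot(e^{\mu_1it\Lambda}\vec g_1\otimes e^{\mu_2it\Lambda}\vec g_2)$, $(\vec a\otimes\vec b)_{ij}=a_ib_j$, $(\nabla\cdot M)_j=\sum_i\partial_iM_{ij}$. $R_\pm\vec v=\frac12\vec e_3\cdot(|\nabla_h|^{-1}\nabla\times\vec v\pm|\nabla||\nabla_h|^{-1}\vec v)$; for scalar $G$, $\widehat{R^{-1}_\pm G}(\xi)=-i\hat G(\xi)(\vec\Gamma_1\pm i\vec\Gamma_2)$ with $\vec\Gamma_1=(-\xi_2/|\xi_h|,\xi_1/|\xi_h|,0)$, $\vec\Gamma_2=\frac{\xi}{|\xi|}\times\vec\Gamma_1$. $\mathcal F\{Q_{\bar\mu}[\mathfrak m](f_1,f_2)\}(\xi)=(2\pi)^{-3}\int e^{it\Phi_{\bar\mu}(\xi,\eta)}\mathfrak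 m(\xi,\eta)\hat f_1(\xi-\eta)\hat f_2(\eta)d\eta$, $\Phi_{\bar\mu}=-\mu\Lambda(\xi)+\mu_1\Lambda(\xi-\eta)+\mu_2\Lambda(\eta)$. *)

(* Defs.v *)
From Stdlib Require Import Reals List.
From Coquelicot Require Import Coquelicot.
Import ListNotations.
Open Scope R_scope.

(** Frequencies in R^3 and complex 3-vectors (values of vector symbols). *)
Record R3 := mkR3 { x1 : R; x2 : R; x3 : R }.
Record C3 := mkC3 { z1 : C; z2 : C; z3 : C }.

Definition R3sub (a b : R3) : R3 := mkR3 (x1 a - x1 b) (x2 a - x2 b) (x3 a - x3 b).

Definition nrm (xi : R3) : R := sqrt (x1 xi ^ 2 + x2 xi ^ 2 + x3 xi ^ 2).
Definition nrmh (xi : R3) : R := sqrt (x1 xi ^ 2 + x2 xi ^ 2).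

Inductive sgn := Pl | Mi.
Definition sv (s : sgn) : R := match s with Pl => 1 | Mi => -1 end.

(** Symbols of the scalar Fourier multipliers (convention f^(xi)=∫ f e^{-ix.xi},
    so d_j has symbol i xi_j). *)
Definition Lam (xi : R3) : R := x3 xi / nrm xi.
Inductive Op := OLam | OSqrt | OD1 | OD2.
Definition opsym (o : Op) (xi : R3) : C :=
  match o with
  | OLam => RtoC (Lam xi)
  | OSqrt => RtoC (sqrt (1 - Lam xi ^ 2))
  | OD1 => (Ci * RtoC (x1 xi / nrmh xi))%C
  | OD2 => (Ci * RtoC (x2 xi / nrmh xi))%C
  end.
Definition wsym (w : list Op) (xi : R3) : C :=
  fold_right (fun o acc => Cmult (opsym o xi) acc) (RtoC 1) w.

Definition cadd (u v : C3) : C3 := mkC3 (z1 u + z1 v)%C (z2 u + z2 v)%C (z3 u + z3 v)%C.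
Definition cscal (c : C) (u : C3) : C3 := mkC3 (c * z1 u)%C (c * z2 u)%C (c * z3 u)%C.
Definition cdot (u v : C3) : C := (z1 u * z1 v + z2 u * z2 v + z3 u * z3 v)%C.
Definition ccross (u v : C3) : C3 :=
  mkC3 (z2 u * z3 v - z3 u * z2 v)%C (z3 u * z1 v - z1 u * z3 v)%C
       (z1 u * z2 v - z2 u * z1 v)%C.
Definition toC3 (xi : R3) : C3 := mkC3 (RtoC (x1 xi)) (RtoC (x2 xi)) (RtoC (x3 xi)).

Definition Gam1 (xi : R3) : C3 :=
  mkC3 (RtoC (- x2 xi / nrmh xi)) (RtoC (x1 xi / nrmh xi)) (RtoC 0).
Definition Gam2 (xi : R3) : C3 := ccross (cscal (RtoC (/ nrm xi)) (toC3 xi)) (Gam1 xi).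

Definition Rinv_sym (s : sgn) (xi : R3) : C3 :=
  cscal (- Ci)%C (cadd (Gam1 xi) (cscal (RtoC (sv s) * Ci)%C (Gam2 xi))).

(** P_L = Id - nabla Delta^{-1} nabla. : v ↦ v - xi (xi.v)/|xi|^2 *)
Definition PL_sym (xi : R3) (v : C3) : C3 :=
  cadd v (cscal (- (cdot (toC3 xi) v) / RtoC (nrm xi ^ 2))%C (toC3 xi)).
(** P_s = 1/2 (Id ± |nabla|^{-1} nabla x) : v ↦ 1/2 (v ± |xi|^{-1} i xi × v) *)
Definition Ps_sym (s : sgn) (xi : R3) (v : C3) : C3 :=
  cscal (RtoC (/ 2))
    (cadd v (cscal (RtoC (sv s / nrm xi) * Ci)%C (ccross (toC3 xi) v))).
(** R_s v = 1/2 e_3.(|nabla_h|^{-1} nabla × v ± |nabla||nabla_h|^{-1} v) *)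
Definition Rs_sym (s : sgn) (xi : R3) (v : C3) : C :=
  (RtoC (/ 2) *
   (z3 (cscal (Ci / RtoC (nrmh xi))%C (ccross (toC3 xi) v))
    + RtoC (sv s * nrm xi / nrmh xi) * z3 v))%C.

(** The bilinear symbol m_{mu bar}(xi, eta) of
    R_mu N_{mu bar}(R^{-1}_{mu1} G1, R^{-1}_{mu2} G2), with the common factor
    (2pi)^{-3} e^{it Phi} removed.  Divergence: (nabla.(a ⊗ b))_j has symbol
    i (xi . a(xi-eta)) b_j(eta). *)
Definition msym (mu mu1 mu2 : sgn) (xi eta : R3) : C :=
  let a := Rinv_sym mu1 (R3sub xi eta) in
  let b := Rinv_sym mu2 eta in
  Rs_sym mu xi
    (cscal (- RtoC 1)%C
       (Ps_sym mu xi (PL_sym xi (cscal (Ci * cdot (toC3 xi) a)%C b)))).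

(** frequencies where all symbols are defined (a.e.) *)
Definition admissible (xi eta : R3) : Prop :=
  nrmh xi <> 0 /\ nrmh eta <> 0 /\ nrmh (R3sub xi eta) <> 0.

Definition term := (C * list Op * list Op * list Op)%type.
Definition sum_form1 (L : list term) (xi eta : R3) : C :=
  fold_right (fun t acc =>
    let '(c, w0, w1, w2) := t in
    (c * RtoC (nrm xi) * wsym w0 xi * wsym w1 (R3sub xi eta) * wsym w2 eta + acc)%C)
    (RtoC 0) L.
Definition sum_form2 (L : list term) (xi eta : R3) : C :=
  fold_right (fun t acc =>
    let '(c, w0, w1, w2) := t in
    (c * wsym w0 xi * wsym w1 (R3sub xi eta) * (RtoC (nrm eta) * wsym w2 eta) + acc)%C)
    (RtoC 0) L.

(* Main.v *)
Require Import Defs.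
From Stdlib Require Import Reals List Lra.
From Coquelicot Require Import Coquelicot.
Import ListNotations.
Open Scope R_scope.

Fixpoint psum (L : list term) (xi eta : R3) : C :=
  match L with
  | [] => RtoC 0
  | t :: L' => let '(c, w0, w1, w2) := t in
      (c * wsym w0 xi * wsym w1 (R3sub xi eta) * wsym w2 eta + psum L' xi eta)%C
  end.

Definition Poly (f : R3 -> R3 -> C) : Prop :=
  exists L, forall xi eta, admissible xi eta -> f xi eta = psum L xi eta.

Lemma wsym_app w w' x : wsym (w ++ w') x = (wsym w x * wsym w' x)%C.
Proof. induction w as [|o w IH]; simpl. ring. rewrite IH. ring. Qed.

Lemma psum_app L1 L2 xi eta : psum (L1 ++ L2) xi eta = (psum L1 xi eta + psum L2 xi eta)%C.
Proof. induction L1 as [|[[[c a] b] d] L IH]; simpl. ring. rewrite IH. ring. Qed.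

Definition tmul (t1 t2 : term) : term :=
  let '(c, a, b, d) := t1 in let '(c', a', b', d') := t2 in
  ((c * c')%C, a ++ a', b ++ b', d ++ d').

Lemma psum_map t L xi eta :
  psum (map (tmul t) L) xi eta = (psum [t] xi eta * psum L xi eta)%C.
Proof.
  destruct t as [[[c a] b] d]. induction L as [|[[[c' a'] b'] d'] L IH]; simpl in *.
  ring. rewrite IH, !wsym_app. ring.
Qed.

Lemma psum_prod L1 L2 xi eta :
  psum (flat_map (fun t => map (tmul t) L2) L1) xi eta = (psum L1 xi eta * psum L2 xi eta)%C.
Proof.
  induction L1 as [|t L IH]; simpl. ring.
  rewrite psum_app, IH, psum_map. destruct t as [[[c a] b] d]; simpl. ring.
Qed.

Lemma P_add f g : Poly f -> Poly g -> Poly (fun x y => (f x y + g x y)%C).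
Proof. intros [L1 H1] [L2 H2]. exists (L1 ++ L2). intros. rewrite psum_app, H1, H2; auto. Qed.
Lemma P_mul f g : Poly f -> Poly g -> Poly (fun x y => (f x y * g x y)%C).
Proof. intros [L1 H1] [L2 H2]. exists (flat_map (fun t => map (tmul t) L2) L1).
  intros. rewrite psum_prod, H1, H2; auto. Qed.
Lemma P_const c : Poly (fun _ _ => c).
Proof. exists [(c, [], [], [])]. intros; simpl. ring. Qed.
Lemma P_opp f : Poly f -> Poly (fun x y => (- f x y)%C).
Proof. intros H. assert (E := P_mul _ _ (P_const (-1)%C) H). destruct E as [L HL].
  exists L. intros. rewrite <- HL; auto. ring. Qed.
Lemma P_sub f g : Poly f -> Poly g -> Poly (fun x y => (f x y - g x y)%C).
Proof. intros Hf Hg. destruct (P_add _ _ Hf (P_opp _ Hg)) as [L HL]. exists L.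
  intros. rewrite <- HL; auto. Qed.
Lemma P_ext f g : Poly g -> (forall x y, admissible x y -> f x y = g x y) -> Poly f.
Proof. intros [L HL] E. exists L. intros. rewrite E; auto. Qed.

Lemma P_op0 o : Poly (fun x y => opsym o x).
Proof. exists [(RtoC 1, [o], [], [])]. intros; simpl. ring. Qed.
Lemma P_op1 o : Poly (fun x y => opsym o (R3sub x y)).
Proof. exists [(RtoC 1, [], [o], [])]. intros; simpl. ring. Qed.
Lemma P_op2 o : Poly (fun x y => opsym o y).
Proof. exists [(RtoC 1, [], [], [o])]. intros; simpl. ring. Qed.

Lemma sf1 L xi eta : sum_form1 L xi eta = (RtoC (nrm xi) * psum L xi eta)%C.
Proof. induction L as [|[[[c a] b] d] L IH]; simpl. ring. rewrite IH. ring. Qed.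
Lemma sf2 L xi eta : sum_form2 L xi eta = (RtoC (nrm eta) * psum L xi eta)%C.
Proof. induction L as [|[[[c a] b] d] L IH]; simpl. ring. rewrite IH. ring. Qed.

Definition OA1 v : C := RtoC (x1 v / nrmh v).
Definition OA2 v : C := RtoC (x2 v / nrmh v).
Definition OLm v : C := RtoC (Lam v).
Definition OSg v : C := RtoC (nrmh v / nrm v).

Lemma nrmh_sq v : nrmh v ^ 2 = x1 v ^ 2 + x2 v ^ 2.
Proof. unfold nrmh. rewrite pow2_sqrt; auto. pose proof (pow2_ge_0 (x1 v)); pose proof (pow2_ge_0 (x2 v)); lra. Qed.
Lemma nrm_sq v : nrm v ^ 2 = x1 v ^ 2 + x2 v ^ 2 + x3 v ^ 2.
Proof. unfold nrm. rewrite pow2_sqrt; auto. pose proof (pow2_ge_0 (x1 v)); pose proof (pow2_ge_0 (x2 v)); pose proof (pow2_ge_0 (x3 v)); lra. Qed.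
Lemma nrmh_pos v : nrmh v <> 0 -> 0 < nrmh v.
Proof. intros H. pose proof (sqrt_pos (x1 v ^ 2 + x2 v ^ 2)). unfold nrmh in *. lra. Qed.
Lemma nrm_pos v : nrmh v <> 0 -> 0 < nrm v.
Proof. intros H. pose proof (nrmh_pos v H). pose proof (nrm_sq v). pose proof (nrmh_sq v).
  pose proof (sqrt_pos (x1 v ^ 2 + x2 v ^ 2 + x3 v ^ 2)). fold (nrm v) in H3.
  destruct (Req_dec (nrm v) 0) as [E|E]. rewrite E in H1. nra. lra. Qed.

Lemma sqrt_op v : nrmh v <> 0 -> sqrt (1 - Lam v ^ 2) = nrmh v / nrm v.
Proof. intros H. pose proof (nrmh_pos v H). pose proof (nrm_pos v H).
  replace (1 - Lam v ^ 2) with ((nrmh v / nrm v) ^ 2).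
  apply sqrt_pow2. apply Rlt_le, Rdiv_lt_0_compat; auto.
  unfold Lam. pose proof (nrm_sq v). pose proof (nrmh_sq v).
  pose proof (Rgt_not_eq _ _ H1) as Hn.
  replace ((nrmh v / nrm v) ^ 2) with (nrmh v ^ 2 / nrm v ^ 2) by (field; exact Hn).
  replace ((x3 v / nrm v) ^ 2) with (x3 v ^ 2 / nrm v ^ 2) by (field; exact Hn).
  rewrite H3. replace (x1 v ^ 2 + x2 v ^ 2) with (nrm v ^ 2 - x3 v ^ 2) by lra. field. exact Hn. Qed.

Lemma RtoC_nz r : r <> 0 -> RtoC r <> 0%C.
Proof. intros H E. apply H. apply RtoC_inj. exact E. Qed.

Section Pos.
Variable pos : R3 -> R3 -> R3.
Hypothesis Hop : forall o, Poly (fun x y => opsym o (pos x y)).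
Hypothesis Hadm : forall x y, admissible x y -> nrmh (pos x y) <> 0.
Lemma P_A1 : Poly (fun x y => OA1 (pos x y)).
Proof. apply (P_ext _ _ (P_mul _ _ (P_const (- Ci)%C) (Hop OD1))). intros x y _.
  unfold OA1; simpl. apply injective_projections; simpl; ring. Qed.
Lemma P_A2 : Poly (fun x y => OA2 (pos x y)).
Proof. apply (P_ext _ _ (P_mul _ _ (P_const (- Ci)%C) (Hop OD2))). intros x y _.
  unfold OA2; simpl. apply injective_projections; simpl; ring. Qed.
Lemma P_Lm : Poly (fun x y => OLm (pos x y)).
Proof. apply (P_ext _ _ (Hop OLam)). reflexivity. Qed.
Lemma P_Sg : Poly (fun x y => OSg (pos x y)).
Proof. apply (P_ext _ _ (Hop OSqrt)). intros x y H. unfold OSg, opsym. rewrite sqrt_op; auto. Qed.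
End Pos.

Section V.
Variable v : R3.
Hypothesis Hv : nrmh v <> 0.
Let Hh := Rgt_not_eq _ _ (nrmh_pos v Hv).
Let Hn := Rgt_not_eq _ _ (nrm_pos v Hv).

Lemma dx1 : RtoC (x1 v) = (RtoC (nrm v) * OSg v * OA1 v)%C.
Proof. unfold OSg, OA1. rewrite <- !RtoC_mult. f_equal. field. split; auto. Qed.
Lemma dx2 : RtoC (x2 v) = (RtoC (nrm v) * OSg v * OA2 v)%C.
Proof. unfold OSg, OA2. rewrite <- !RtoC_mult. f_equal. field. split; auto. Qed.
Lemma dx3 : RtoC (x3 v) = (RtoC (nrm v) * OLm v)%C.
Proof. unfold OLm, Lam. rewrite <- !RtoC_mult. f_equal. field. auto. Qed.
Lemma dh : RtoC (nrmh v) = (RtoC (nrm v) * OSg v)%C.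
Proof. unfold OSg. rewrite <- !RtoC_mult. f_equal. field. auto. Qed.
Lemma nC : RtoC (nrm v) <> 0%C.
Proof. apply RtoC_nz; auto. Qed.
Lemma sC : OSg v <> 0%C.
Proof. apply RtoC_nz. unfold Rdiv. apply Rmult_integral_contrapositive; split; auto.
  apply Rinv_neq_0_compat; auto. Qed.
Lemma rel_a : (OA1 v * OA1 v + OA2 v * OA2 v)%C = 1%C.
Proof. unfold OA1, OA2. rewrite <- !RtoC_mult, <- RtoC_plus. f_equal.
  pose proof (nrmh_sq v). field_simplify; auto. replace (x1 v ^ 2 + x2 v ^ 2) with (nrmh v ^ 2) by lra. field; auto. Qed.
Lemma rel_l : (1 - OLm v * OLm v - OSg v * OSg v)%C = 0%C.
Proof. unfold OLm, OSg, Lam. rewrite <- !RtoC_mult, <- !RtoC_minus. f_equal.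
  pose proof (nrmh_sq v). pose proof (nrm_sq v).
  replace (nrmh v / nrm v * (nrmh v / nrm v)) with (nrmh v ^ 2 / nrm v ^ 2) by (field; auto).
  replace (x3 v / nrm v * (x3 v / nrm v)) with (x3 v ^ 2 / nrm v ^ 2) by (field; auto).
  rewrite H. replace (x1 v ^ 2 + x2 v ^ 2) with (nrm v ^ 2 - x3 v ^ 2) by lra. field; auto. Qed.

Lemma Gam1_e : Gam1 v = mkC3 (- OA2 v)%C (OA1 v) (RtoC 0).
Proof. unfold Gam1, OA1, OA2. f_equal. rewrite <- RtoC_opp. f_equal. field. auto. Qed.
End V.

Definition XH (a1 a2 l s : C) : C3 := mkC3 (s * a1)%C (s * a2)%C l.
Definition RinvE (sg : sgn) (a1 a2 l s : C) : C3 :=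
  cscal (- Ci)%C (cadd (mkC3 (- a2)%C a1 (RtoC 0))
     (cscal (RtoC (sv sg) * Ci)%C (mkC3 (- (l * a1))%C (- (l * a2))%C s))).

Lemma toC3_e v : nrmh v <> 0 ->
  toC3 v = cscal (RtoC (nrm v)) (XH (OA1 v) (OA2 v) (OLm v) (OSg v)).
Proof. intros H. unfold toC3, XH, cscal; simpl. rewrite (dx1 v H), (dx2 v H), (dx3 v H).
  f_equal; ring. Qed.

Lemma Gam2_e v : nrmh v <> 0 ->
  Gam2 v = mkC3 (- (OLm v * OA1 v))%C (- (OLm v * OA2 v))%C (OSg v).
Proof. intros H. pose proof (nC v H) as Hn. pose proof (rel_a v H) as Ha.
  unfold Gam2. rewrite (Gam1_e v H), (toC3_e v H).
  rewrite (RtoC_inv _ (Rgt_not_eq _ _ (nrm_pos v H))).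
  unfold ccross, cscal, XH; simpl. f_equal.
  - field; auto.
  - field; auto.
  - transitivity (OSg v * (OA1 v * OA1 v + OA2 v * OA2 v))%C. field; auto.
    rewrite Ha. ring.
Qed.

Lemma Rinv_e s v : nrmh v <> 0 ->
  Rinv_sym s v = RinvE s (OA1 v) (OA2 v) (OLm v) (OSg v).
Proof. intros H. unfold Rinv_sym, RinvE. rewrite (Gam1_e v H), (Gam2_e v H). reflexivity. Qed.

Lemma cdot_zero s v : nrmh v <> 0 -> cdot (toC3 v) (Rinv_sym s v) = 0%C.
Proof. intros H. unfold Rinv_sym, Gam2. rewrite (Gam1_e v H), (toC3_e v H).
  unfold cdot, cscal, cadd, ccross, XH; simpl. ring. Qed.

Definition Kraw mu xi u := Rs_sym mu xi (cscal (- RtoC 1)%C (Ps_sym mu xi (PL_sym xi u))).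

Lemma lin mu xi c u : nrmh xi <> 0 ->
  Kraw mu xi (cscal c u) = (c * Kraw mu xi u)%C.
Proof. intros H. pose proof (nC xi H). pose proof (RtoC_nz _ (Rgt_not_eq _ _ (nrmh_pos xi H))).
  destruct u as [u1 u2 u3].
  unfold Kraw, Rs_sym, Ps_sym, PL_sym, cscal, cadd, cdot, ccross, toC3; simpl.
  field. split; auto. apply RtoC_nz. rewrite Rmult_1_r. pose proof (Rgt_not_eq _ _ (nrm_pos xi H)). apply Rmult_integral_contrapositive_currified; auto. Qed.

Definition EK (sg : sgn) (a1 a2 l s : C) (u : C3) : C :=
  let X := XH a1 a2 l s in
  let p := cadd u (cscal (- cdot X u)%C X) in
  let q := cscal (/2)%C (cadd p (cscal (RtoC (sv sg) * Ci)%C (ccross X p))) in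
  let w := cscal (- RtoC 1)%C q in
  (/2 * (Ci * (a1 * z2 w - a2 * z1 w) + RtoC (sv sg) * (- (/2)) *
     ((s * z3 u - l * (a1 * z1 u + a2 * z2 u)) + RtoC (sv sg) * Ci * (a1 * z2 p - a2 * z1 p))))%C.

Lemma K_e mu xi u : nrmh xi <> 0 ->
  Kraw mu xi u = EK mu (OA1 xi) (OA2 xi) (OLm xi) (OSg xi) u.
Proof. intros H. pose proof (nC xi H) as Hn. pose proof (sC xi H) as Hs.
  pose proof (Rgt_not_eq _ _ (nrmh_pos xi H)) as Hh'. pose proof (Rgt_not_eq _ _ (nrm_pos xi H)) as Hn'.
  pose proof (rel_l xi H) as Hrel.
  destruct u as [u1 u2 u3].
  transitivity (EK mu (OA1 xi) (OA2 xi) (OLm xi) (OSg xi) (mkC3 u1 u2 u3) +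
     /2 * RtoC (sv mu) * (- (/2)) * ((1 - OLm xi * OLm xi - OSg xi * OSg xi) / OSg xi * u3))%C.
  2:{ rewrite Hrel. field. auto. }
  unfold Kraw, Rs_sym, Ps_sym, PL_sym, EK, XH, cscal, cadd, cdot, ccross, toC3; cbn [z1 z2 z3].
  rewrite (RtoC_div _ _ Hn'), (RtoC_div _ _ Hh'), !RtoC_mult, RtoC_pow.
  rewrite (dx1 xi H), (dx2 xi H), (dx3 xi H), (dh xi H).
  rewrite (RtoC_inv 2 ltac:(lra)).
  field. auto.
Qed.

Lemma adm0 : forall x y, admissible x y -> nrmh ((fun x y => x) x y) <> 0.
Proof. intros x y [H _]; exact H. Qed.
Lemma adm1 : forall x y, admissible x y -> nrmh ((fun x y => R3sub x y) x y) <> 0.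
Proof. intros x y [_ [_ H]]; exact H. Qed.
Lemma adm2 : forall x y, admissible x y -> nrmh ((fun x y => y) x y) <> 0.
Proof. intros x y [_ [H _]]; exact H. Qed.

Lemma Q0a : Poly (fun x y => OA1 x). Proof. exact (P_A1 (fun x y => x) P_op0). Qed.
Lemma Q0b : Poly (fun x y => OA2 x). Proof. exact (P_A2 (fun x y => x) P_op0). Qed.
Lemma Q0c : Poly (fun x y => OLm x). Proof. exact (P_Lm (fun x y => x) P_op0). Qed.
Lemma Q0d : Poly (fun x y => OSg x). Proof. exact (P_Sg (fun x y => x) P_op0 adm0). Qed.
Lemma Q1a : Poly (fun x y => OA1 (R3sub x y)). Proof. exact (P_A1 (fun x y => R3sub x y) P_op1). Qed.
Lemma Q1b : Poly (fun x y => OA2 (R3sub x y)). Proof. exact (P_A2 (fun x y => R3sub x y) P_op1). Qed.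
Lemma Q1c : Poly (fun x y => OLm (R3sub x y)). Proof. exact (P_Lm (fun x y => R3sub x y) P_op1). Qed.
Lemma Q1d : Poly (fun x y => OSg (R3sub x y)). Proof. exact (P_Sg (fun x y => R3sub x y) P_op1 adm1). Qed.
Lemma Q2a : Poly (fun x y => OA1 y). Proof. exact (P_A1 (fun x y => y) P_op2). Qed.
Lemma Q2b : Poly (fun x y => OA2 y). Proof. exact (P_A2 (fun x y => y) P_op2). Qed.
Lemma Q2c : Poly (fun x y => OLm y). Proof. exact (P_Lm (fun x y => y) P_op2). Qed.
Lemma Q2d : Poly (fun x y => OSg y). Proof. exact (P_Sg (fun x y => y) P_op2 adm2). Qed.

Ltac pclose := repeat first [
  exact Q0a | exact Q0b | exact Q0c | exact Q0d |
  exact Q1a | exact Q1b | exact Q1c | exact Q1d |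
  exact Q2a | exact Q2b | exact Q2c | exact Q2d |
  apply P_const |
  apply P_add | apply P_sub | apply P_mul | apply P_opp ].

Definition F1 mu mu1 mu2 (pos : R3 -> R3 -> R3) xi eta : C :=
  (Ci * cdot (XH (OA1 (pos xi eta)) (OA2 (pos xi eta)) (OLm (pos xi eta)) (OSg (pos xi eta)))
     (RinvE mu1 (OA1 (R3sub xi eta)) (OA2 (R3sub xi eta)) (OLm (R3sub xi eta)) (OSg (R3sub xi eta)))
   * EK mu (OA1 xi) (OA2 xi) (OLm xi) (OSg xi)
       (RinvE mu2 (OA1 eta) (OA2 eta) (OLm eta) (OSg eta)))%C.

Lemma F1_poly0 mu mu1 mu2 : Poly (F1 mu mu1 mu2 (fun x y => x)).
Proof.
  cbv beta zeta iota delta [F1 EK XH RinvE cdot cscal cadd ccross z1 z2 z3].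
  pclose.
Qed.
Lemma F1_poly2 mu mu1 mu2 : Poly (F1 mu mu1 mu2 (fun x y => y)).
Proof.
  cbv beta zeta iota delta [F1 EK XH RinvE cdot cscal cadd ccross z1 z2 z3].
  pclose.
Qed.

Lemma cdot_scal c X a : cdot (cscal c X) a = (c * cdot X a)%C.
Proof. unfold cdot, cscal; cbn [z1 z2 z3]. ring. Qed.

Lemma cdot_split xi eta a :
  cdot (toC3 xi) a = (cdot (toC3 (R3sub xi eta)) a + cdot (toC3 eta) a)%C.
Proof. unfold cdot, toC3, R3sub; cbn [z1 z2 z3 x1 x2 x3]. rewrite !RtoC_minus. ring. Qed.

Lemma msym_e mu mu1 mu2 xi eta : admissible xi eta ->
  msym mu mu1 mu2 xi eta =
  ((Ci * cdot (toC3 xi) (Rinv_sym mu1 (R3sub xi eta))) *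
    EK mu (OA1 xi) (OA2 xi) (OLm xi) (OSg xi)
       (RinvE mu2 (OA1 eta) (OA2 eta) (OLm eta) (OSg eta)))%C.
Proof. intros [H0 [H2 H1]].
  change (msym mu mu1 mu2 xi eta) with
    (Kraw mu xi (cscal (Ci * cdot (toC3 xi) (Rinv_sym mu1 (R3sub xi eta)))%C (Rinv_sym mu2 eta))).
  rewrite (lin _ _ _ _ H0), (K_e _ _ _ H0), (Rinv_e _ _ H2). reflexivity. Qed.

Theorem lemma3p8 (mu mu1 mu2 : sgn) :
  (exists L : list term, forall xi eta : R3, admissible xi eta ->
      msym mu mu1 mu2 xi eta = sum_form1 L xi eta) /\
  (exists L : list term, forall xi eta : R3, admissible xi eta ->
      msym mu mu1 mu2 xi eta = sum_form2 L xi eta).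
Proof.
  split.
  - destruct (F1_poly0 mu mu1 mu2) as [L HL]. exists L. intros xi eta Ha.
    rewrite sf1, <- HL by exact Ha. rewrite (msym_e _ _ _ _ _ Ha).
    destruct Ha as [H0 [H2 H1]].
    rewrite (toC3_e xi H0), cdot_scal, (Rinv_e _ _ H1). unfold F1. ring.
  - destruct (F1_poly2 mu mu1 mu2) as [L HL]. exists L. intros xi eta Ha.
    rewrite sf2, <- HL by exact Ha. rewrite (msym_e _ _ _ _ _ Ha).
    destruct Ha as [H0 [H2 H1]].
    rewrite (cdot_split xi eta), (cdot_zero _ _ H1), (toC3_e eta H2), cdot_scal, (Rinv_e _ _ H1).
    unfold F1. ring.
Qed.
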